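(* Let $A\in\mathbb{R}^{n\times n}$ be symmetric, with Moore–Penrose pseudoinverse $A^\dagger$, and let $\|\cdot\|$ be the Frobenius norm. (i) The problem $\min_X \tfrac12\|X\|^2$ subject to $AXA=A$ is equivalent to (has the same $X$-solution as) $\min_{\Gamma,X}\tfrac12\|A^\dagger - X\|^2$ subject to $X = A\Gamma A$. (ii) For any $X_k\in\mathbb{R}^{n\times n}$ and $S\in\mathbb{R}^{n\times\tau}$, the problem $$X_{k+1}=\arg\min_X \tfrac12\|X-X_k\|^2\quad\text{subject to}\quad S^\top A X A S = S^\top A S$$ is equivalent to (has the same $X$-solution as) $\min_{\Gamma,X}\tfrac12\|X-A^\dagger\|^2$ subject to $X = X_k + AS\Gamma S^\top A$. (iii) The solution of the problem in (ii) is $$X_{k+1} = X_k + AS(S^\top A^2 S)^\dagger S^\top (A - A X_k A) S (S^\top A^2 S)^\dagger S^\top A.$$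
   Context: $M^\dagger$ denotes the Moore–Penrose pseudoinverse of a real matrix $M$; $\|X\|=\sqrt{\mathrm{Tr}(X^\top X)}$. *)

(* Defs.v *)
From HB Require Import structures.
From mathcomp Require Import all_boot all_order all_algebra.
From mathcomp Require Import reals.
Set Implicit Arguments. Unset Strict Implicit. Unset Printing Implicit Defensive.
Import Order.TTheory GRing.Theory Num.Theory.
Local Open Scope ring_scope.

(* Moore–Penrose pseudoinverse, characterised by the four Penrose equations:
   P is the Moore–Penrose pseudoinverse of M : 'M_(m,n) (P : 'M_(n,m)). *)
Definition is_pinv (R : realType) (m n : nat) (M : 'M[R]_(m, n)) (P : 'M[R]_(n, m)) : Prop :=
  [/\ M *m P *m M = M,
      P *m M *m P = P,
      (M *m P)^T = M *m P
    & (P *m M)^T = P *m M].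

Definition frob (R : realType) (m n : nat) (X : 'M[R]_(m, n)) : R :=
  Num.sqrt (\tr (X^T *m X)).

Definition is_argmin (T : Type) (R : realType) (f : T -> R) (C : T -> Prop) (x : T) : Prop :=
  C x /\ forall y, C y -> f x <= f y.

Definition is_argmin_X (G T : Type) (R : realType)
  (f : G * T -> R) (C : G * T -> Prop) (X : T) : Prop :=
  exists g : G, is_argmin f C (g, X).

(* Main.v *)
Require Import Defs.
From HB Require Import structures.
From mathcomp Require Import all_boot all_order all_algebra.
From mathcomp Require Import reals.
Import Order.TTheory GRing.Theory Num.Theory.
Local Open Scope ring_scope.
Set Implicit Arguments. Unset Strict Implicit.

Section Aux.
Variable R : realType.

Lemma trTT_sum p q (E : 'M[R]_(p,q)) :
  \tr (E^T *m E) = \sum_i \sum_j E j i ^+ 2.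
Proof.
rewrite /mxtrace; apply: eq_bigr => i _; rewrite !mxE.
by apply: eq_bigr => j _; rewrite !mxE expr2.
Qed.

Lemma trTT_ge0 p q (E : 'M[R]_(p,q)) : 0 <= \tr (E^T *m E).
Proof.
rewrite trTT_sum; apply: sumr_ge0 => i _; apply: sumr_ge0 => j _.
exact: sqr_ge0.
Qed.

Lemma trTT_eq0 p q (E : 'M[R]_(p,q)) : \tr (E^T *m E) = 0 -> E = 0.
Proof.
rewrite trTT_sum => H.
have H1 := psumr_eq0P (fun i _ => sumr_ge0 _ (fun j _ => sqr_ge0 (E j i))) H.
apply/matrixP => j i; rewrite mxE.
have H2 := psumr_eq0P (fun j _ => sqr_ge0 (E j i)) (H1 i isT).
by have /eqP := H2 j isT; rewrite sqrf_eq0 => /eqP.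
Qed.

Lemma zid (V : zmodType) (x a b p : V) : x + a - p = a - b + (x + b - p).
Proof. by rewrite [x + b]addrC -!addrA addKr addrCA. Qed.

Lemma frob2 p q (E : 'M[R]_(p,q)) : frob E ^+ 2 = \tr (E^T *m E).
Proof. by rewrite /frob sqr_sqrtr // trTT_ge0. Qed.

Lemma trT_sym p q (U V : 'M[R]_(p,q)) : \tr (V^T *m U) = \tr (U^T *m V).
Proof. by rewrite -mxtrace_tr trmx_mul trmxK. Qed.

Lemma pyth p q (U V : 'M[R]_(p,q)) : \tr (U^T *m V) = 0 ->
  \tr ((U + V)^T *m (U + V)) = \tr (U^T *m U) + \tr (V^T *m V).
Proof.
move=> h; rewrite [(U+V)^T]raddfD /= !mulmxDl !mulmxDr !mxtraceD (trT_sym U V) h addr0 add0r.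
done.
Qed.

Lemma orth n m (B : 'M[R]_(n,m)) (G : 'M[R]_m) (E : 'M[R]_n) :
  B^T *m E *m B = 0 -> \tr ((B *m G *m B^T)^T *m E) = 0.
Proof.
move=> h; rewrite !trmx_mul trmxK -!mulmxA mxtrace_mulC -!mulmxA.
by rewrite (mulmxA _ E) h mulmx0 mxtrace0.
Qed.

Lemma half_le (a b : R) : (2^-1 * a <= 2^-1 * b) = (a <= b).
Proof. by rewrite ler_pM2l // invr_gt0. Qed.

Section Core.
Variables (n m : nat) (B : 'M[R]_(n,m)) (P Xk Xs : 'M[R]_n) (Gs : 'M[R]_m).
Hypothesis h1 : B^T *m (Xs - P) *m B = 0.
Hypothesis h2 : Xs = Xk + B *m Gs *m B^T.

Lemma core1 X :
  is_argmin (fun X : 'M[R]_n => 2^-1 * frob (X - Xk) ^+ 2)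
            (fun X => B^T *m (X - P) *m B = 0) X <-> X = Xs.
Proof.
have key : forall Y, B^T *m (Y - P) *m B = 0 ->
  frob (Y - Xk) ^+ 2 = \tr ((Y - Xs)^T *m (Y - Xs)) + frob (Xs - Xk) ^+ 2.
  move=> Y hY; rewrite !frob2.
  have -> : Y - Xk = (Y - Xs) + (Xs - Xk) by rewrite addrA subrK.
  rewrite pyth //.
  rewrite trT_sym {1}h2 (addrC Xk) addrK orth //.
  have -> : Y - Xs = (Y - P) - (Xs - P) by rewrite opprB addrA subrK.
  by rewrite mulmxBr mulmxBl hY h1 subr0.
split.
  move=> [hX hmin]; have := hmin Xs h1.
  rewrite half_le (key X hX) (key Xs h1) subrr trmx0 mul0mx mxtrace0 add0r.
  rewrite gerDr => hle.
  have h0 : \tr ((X - Xs)^T *m (X - Xs)) = 0.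
    by apply/eqP; rewrite eq_le hle trTT_ge0.
  by apply/eqP; rewrite -subr_eq0; apply/eqP; apply: trTT_eq0.
move=> ->; split => // Y hY.
rewrite half_le (key Y hY) (key Xs h1) subrr trmx0 mul0mx mxtrace0 add0r lerDr.
exact: trTT_ge0.
Qed.

Lemma core2 X :
  is_argmin_X (fun p : 'M[R]_m * 'M[R]_n => 2^-1 * frob (p.2 - P) ^+ 2)
              (fun p => p.2 = Xk + B *m p.1 *m B^T) X <-> X = Xs.
Proof.
have key : forall G, 
  frob (Xk + B *m G *m B^T - P) ^+ 2 =
   \tr ((B *m (G - Gs) *m B^T)^T *m (B *m (G - Gs) *m B^T)) + frob (Xs - P) ^+ 2.
  move=> G; rewrite !frob2.
  have -> : Xk + B *m G *m B^T - P = B *m (G - Gs) *m B^T + (Xs - P).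
    by rewrite h2 mulmxBr mulmxBl (zid _ _ (B *m Gs *m B^T)).
  by rewrite pyth // orth.
split.
  move=> [g [/= hX hmin]]; have := hmin (Gs, Xs) h2.
  rewrite /= half_le hX key gerDr => hle.
  have h0 : B *m (g - Gs) *m B^T = 0.
    by apply: trTT_eq0; apply/eqP; rewrite eq_le hle trTT_ge0.
  rewrite h2; congr (Xk + _); apply/eqP; rewrite -subr_eq0 -mulmxBl -mulmxBr h0 //.
move=> ->; exists Gs; split => //= [[G Y]] /= ->.
rewrite half_le key lerDr.
exact: trTT_ge0.
Qed.
End Core.

Lemma argmin_ext (T : Type) (f g : T -> R) (C D : T -> Prop) x :
  (forall x, f x = g x) -> (forall x, C x <-> D x) ->
  is_argmin f C x <-> is_argmin g D x.
Proof.
move=> hf hC; split=> [[h1 h2]|[h1 h2]]; split; first (by apply/hC);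
  try (by move=> y /hC hy; rewrite -!hf; apply: h2);
  try (by apply/hC);
  by move=> y /hC hy; rewrite !hf; apply: h2.
Qed.

Lemma argminX_ext (G T : Type) (f g : G * T -> R) (C D : G * T -> Prop) x :
  (forall x, f x = g x) -> (forall x, C x <-> D x) ->
  is_argmin_X f C x <-> is_argmin_X g D x.
Proof.
move=> hf hC; split=> [[y hy]|[y hy]]; exists y.
  exact: (@argmin_ext _ _ _ _ _ (y, x) hf hC).1 hy.
exact: (@argmin_ext _ _ _ _ _ (y, x) hf hC).2 hy.
Qed.

Lemma frobN p q (E : 'M[R]_(p,q)) : frob (- E) = frob E.
Proof. by rewrite /frob [(- E)^T]raddfN /= mulNmx mulmxN opprK. Qed.

Lemma key_pinv n m (B : 'M[R]_(n,m)) (Y : 'M[R]_m) :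
  (B^T *m B) *m Y *m (B^T *m B) = B^T *m B -> B *m Y *m (B^T *m B) = B.
Proof.
move=> h; set M := B^T *m B in h *.
have E0 : B *m (Y *m M - 1%:M) = 0.
  apply: trTT_eq0.
  rewrite trmx_mul -mulmxA (mulmxA B^T) -/M mulmxBr mulmx1 (mulmxA M Y M) h.
  by rewrite subrr mulmx0 mxtrace0.
by apply/eqP; rewrite -subr_eq0 -[B in _ - B]mulmx1 -mulmxA -mulmxBr E0.
Qed.

Lemma key_pinv2 n m (B : 'M[R]_(n,m)) (Y : 'M[R]_m) :
  (B^T *m B) *m Y *m (B^T *m B) = B^T *m B -> (B^T *m B) *m Y *m B^T = B^T.
Proof.
move=> h.
have h' : (B^T *m B) *m Y^T *m (B^T *m B) = B^T *m B.
  by have := congr1 trmx h; rewrite !trmx_mul !trmxK !mulmxA => ->; rewrite ?trmx_mul ?trmxK.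
have e := congr1 trmx (key_pinv h'); rewrite !trmx_mul !trmxK in e.
by rewrite -[RHS]e !mulmxA.
Qed.

Lemma mk_h1 n m (B : 'M[R]_(n,m)) (Xk P : 'M[R]_n) (Gs : 'M[R]_m) :
  B^T *m B *m Gs *m B^T *m B = B^T *m (P - Xk) *m B ->
  B^T *m (Xk + B *m Gs *m B^T - P) *m B = 0.
Proof.
move=> h.
have -> : Xk + B *m Gs *m B^T - P = B *m Gs *m B^T - (P - Xk).
  by rewrite opprB addrC addrA (addrC (- P)) addrC.
by rewrite mulmxBr mulmxBl !mulmxA h subrr.
Qed.

Lemma row_sub n m p (B : 'M[R]_(n,m)) (Z : 'M[R]_(p,n)) :
  (Z *m B <= B^T *m B)%MS.
Proof.
apply: submx_trans (submxMl Z B) _.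
rewrite submxE; apply/eqP.
have h := mulmx_coker (B^T *m B).
apply: trTT_eq0.
by rewrite trmx_mul -mulmxA (mulmxA B^T) h mulmx0 mxtrace0.
Qed.

Lemma exist_sol n m (B : 'M[R]_(n,m)) (D : 'M[R]_n) :
  exists Gs : 'M[R]_m, B^T *m B *m Gs *m B^T *m B = B^T *m D *m B.
Proof.
pose G := pinvmx (B^T *m B).
exists (G^T *m (B^T *m D *m B) *m G).
have ha : B^T *m D *m B *m G *m (B^T *m B) = B^T *m D *m B.
  by apply: mulmxKpV; apply: row_sub.
have hb : G^T *m (B^T *m D *m B)^T *m G *m (B^T *m B) = G^T *m (B^T *m D *m B)^T.
  apply: mulmxKpV.
  by rewrite !trmx_mul trmxK !mulmxA; apply: row_sub.
clearbody G.
have hb' := congr1 trmx hb.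
rewrite !trmx_mul !trmxK !mulmxA in hb'.
rewrite !mulmxA in ha.
by rewrite !mulmxA hb' ha.
Qed.
End Aux.

Theorem theorem3 (R : realType) (n tau : nat) (A Ad : 'M[R]_n) :
  A^T = A -> is_pinv A Ad ->
  (* (i) *)
  (forall X : 'M[R]_n,
      is_argmin (fun X : 'M[R]_n => 2^-1 * frob X ^+ 2)
                (fun X => A *m X *m A = A) X
      <->
      is_argmin_X (fun p : 'M[R]_n * 'M[R]_n => 2^-1 * frob (Ad - p.2) ^+ 2)
                  (fun p => p.2 = A *m p.1 *m A) X)
  /\
  (forall (Xk : 'M[R]_n) (S : 'M[R]_(n, tau)),
      (* (ii) *)
      (forall X : 'M[R]_n,
         is_argmin (fun X : 'M[R]_n => 2^-1 * frob (X - Xk) ^+ 2)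
                   (fun X => S^T *m A *m X *m A *m S = S^T *m A *m S) X
         <->
         is_argmin_X (fun p : 'M[R]_tau * 'M[R]_n => 2^-1 * frob (p.2 - Ad) ^+ 2)
                     (fun p => p.2 = Xk + A *m S *m p.1 *m S^T *m A) X)
      /\
      (* (iii) *)
      (forall Md : 'M[R]_tau, is_pinv (S^T *m (A *m A) *m S) Md ->
       forall X : 'M[R]_n,
         is_argmin (fun X : 'M[R]_n => 2^-1 * frob (X - Xk) ^+ 2)
                   (fun X => S^T *m A *m X *m A *m S = S^T *m A *m S) X
         <->
         X = Xk + A *m S *m Md *m S^T *m (A - A *m Xk *m A) *m S *m Md *m S^T *m A)).
Proof.
move=> hAT [p1 p2 p3 p4].
split.
  move=> X.
  have e1 : A *m Ad^T = Ad *m A.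
    by rewrite -{1}hAT -trmx_mul p4.
  have e2 : Ad^T *m A = A *m Ad.
    by rewrite -{1}hAT -trmx_mul p3.
  have h1 : A^T *m (Ad - Ad) *m A = 0 by rewrite subrr mulmx0 mul0mx.
  have h2 : Ad = 0 + A *m (Ad^T *m Ad *m Ad^T) *m A^T.
    rewrite add0r hAT !mulmxA e1 -(mulmxA _ Ad^T) e2 !mulmxA.
    by rewrite !p2.
  have L := core1 h1 h2 X.
  have Rr := core2 h1 h2 X.
  have E1 : is_argmin (fun X : 'M[R]_n => 2^-1 * frob X ^+ 2)
                (fun X => A *m X *m A = A) X <->
     is_argmin (fun X : 'M[R]_n => 2^-1 * frob (X - 0) ^+ 2)
                (fun X => A^T *m (X - Ad) *m A = 0) X.
    apply: argmin_ext => [Y|Y]; first by rewrite subr0.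
    rewrite hAT mulmxBr mulmxBl p1; split => [->|/eqP]; first by rewrite subrr.
    by rewrite subr_eq0 => /eqP.
  have E2 : is_argmin_X (fun p : 'M[R]_n * 'M[R]_n => 2^-1 * frob (Ad - p.2) ^+ 2)
                  (fun p => p.2 = A *m p.1 *m A) X <->
     is_argmin_X (fun p : 'M[R]_n * 'M[R]_n => 2^-1 * frob (p.2 - Ad) ^+ 2)
                  (fun p => p.2 = 0 + A *m p.1 *m A^T) X.
    apply: argminX_ext => [Y|Y]; first by rewrite -frobN opprB.
    by rewrite add0r hAT.
  split=> H.
    exact: E2.2 (Rr.2 (L.1 (E1.1 H))).
  exact: E1.2 (L.2 (Rr.1 (E2.1 H))).
move=> Xk S.
have hBT : (A *m S)^T = S^T *m A by rewrite trmx_mul hAT.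
have q : S^T *m A *m Ad *m A *m S = S^T *m A *m S by rewrite -[in RHS]p1 !mulmxA.
set B := A *m S in hBT *.
have EC : forall X : 'M[R]_n,
    (S^T *m A *m X *m A *m S = S^T *m A *m S) <-> (B^T *m (X - Ad) *m B = 0).
  move=> X; rewrite hBT mulmxBr mulmxBl /B !mulmxA q.
  split => [->|/eqP]; first by rewrite subrr.
  by rewrite subr_eq0 => /eqP.
have EP1 : forall Xs Gs X, B^T *m (Xs - Ad) *m B = 0 -> Xs = Xk + B *m Gs *m B^T ->
   (is_argmin (fun X : 'M[R]_n => 2^-1 * frob (X - Xk) ^+ 2)
                   (fun X => S^T *m A *m X *m A *m S = S^T *m A *m S) X <-> X = Xs).
  move=> Xs Gs X h1 h2; rewrite -(core1 h1 h2 X).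
  by apply: argmin_ext => // Y.
have EP2 : forall Xs Gs X, B^T *m (Xs - Ad) *m B = 0 -> Xs = Xk + B *m Gs *m B^T ->
   (is_argmin_X (fun p : 'M[R]_tau * 'M[R]_n => 2^-1 * frob (p.2 - Ad) ^+ 2)
                     (fun p => p.2 = Xk + B *m p.1 *m S^T *m A) X <-> X = Xs).
  move=> Xs Gs X h1 h2; rewrite -(core2 h1 h2 X).
  apply: argminX_ext => // Y.
  by rewrite hBT !mulmxA.
split.
  have [Gs hGs] := exist_sol B (Ad - Xk).
  have h1 := mk_h1 hGs.
  move=> X; rewrite (EP1 _ _ X h1 erefl) (EP2 _ _ X h1 erefl); done.
move=> Md [m1 m2 m3 m4] X.
have hM : S^T *m (A *m A) *m S = B^T *m B by rewrite hBT /B !mulmxA.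
rewrite hM in m1.
have hmid : S^T *m (A - A *m Xk *m A) *m S = B^T *m (Ad - Xk) *m B.
  by rewrite hBT /B !mulmxBr !mulmxBl !mulmxA q.
clearbody B.
have k1 := key_pinv m1.
have k2 := key_pinv2 m1.
have k1' : forall p (Z : 'M[R]_(p, n)), Z *m B *m Md *m B^T *m B = Z *m B.
  by move=> p Z; rewrite -[in RHS]k1 !mulmxA.
pose Gs := Md *m (S^T *m (A - A *m Xk *m A) *m S) *m Md.
have hGs : B^T *m B *m Gs *m B^T *m B = B^T *m (Ad - Xk) *m B.
  by rewrite /Gs hmid !mulmxA k2 k1'.
have h1 := mk_h1 hGs.
rewrite (EP1 _ _ X h1 erefl).
suff -> : Xk + B *m Gs *m B^T = Xk + B *m Md *m S^T *m (A - A *m Xk *m A) *m S *m Md *m S^T *m A by [].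
by rewrite /Gs hBT !mulmxA.
Qed.
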